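(* Let $(W,S)$ be a Coxeter group with Coxeter matrix $(m_{s,s'})_{(s,s')\in S\times S}$, and let $w\in W$. Let $C$ be a directed cycle in the edge-colored directed graph $\mathcal{R}(w)$. Let $c=[(s,t)]\in\mathfrak{M}/\sim$ be an equivalence class, and let $c^{\mathrm{op}}=[(t,s)]\in\mathfrak{M}/\sim$. Then: (a) The number of arcs colored $c$ appearing in $C$ equals the number of arcs colored $c^{\mathrm{op}}$ appearing in $C$. (b) The number of arcs whose color belongs to $\{c,c^{\mathrm{op}}\}$ appearing in $C$ is even.
   Context: A Coxeter group is a pair $(W,S)$ where $W$ is a group and $S$ a finite subset of $W$ such that there is a matrix $(m_{s,s'})\in\{1,2,3,\ldots,\infty\}^{S\times S}$ with $m_{s,s}=1$, $m_{s,t}=m_{t,s}\geq 2$ for distinct $s,t$, and $W$ is presented by generators $S$ and relations $(st)^{m_{s,t}}=1$ for all $(s,t)$ with $m_{s,t}\neq\infty$ (this is the Coxeter matrix; $m_{s,t}$ is the order of $st$). Let $\mathfrak{M}=\{(s,t)\in S\times S : s\neq t,\ m_{s,t}<\infty\}$. Define the equivalence relation $\sim$ on $\mathfrak{M}$ by $(s,t)\sim(s',t')$ iff there is $q\in W$ with $qsq^{-1}=s'$ and $qtq^{-1}=t'$; $[P]$ denotes the class of $P\in\mathfrak{M}$. A reduced expression for $w\in W$ is a tuple $(a_1,\ldots,a_k)$ of elements of $S$ with $w=a_1\cdots a_k$ and $k$ minimal. A factor of a word $(a_1,\ldots,a_k)$ is a contiguous subword $(a_{i+1},\ldots,a_{i+m})$.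 For $(s,t)\in\mathfrak{M}$ and reduced expressions $\vec a,\vec b$ of $w$, $\vec b$ is obtained from $\vec a$ by an $(s,t)$-braid move if $\vec b$ arises from $\vec a$ by replacing a factor of the form $(s,t,s,t,\ldots)$ ($m_{s,t}$ entries) by $(t,s,t,s,\ldots)$ ($m_{s,t}$ entries). The graph $\mathcal{R}(w)$ has as vertices the reduced expressions of $w$, and for every $(s,t)\in\mathfrak{M}$ and reduced expressions $\vec a,\vec b$ of $w$ such that $\vec b$ is obtained from $\vec a$ by an $(s,t)$-braid move, an arc from $\vec a$ to $\vec b$ colored $[(s,t)]$. *)

(* Defs.v *)
From mathcomp Require Import all_boot.
From mathcomp Require Import boolp.
Set Implicit Arguments. Unset Strict Implicit. Unset Printing Implicit Defensive.

Record group := Group {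
  gcar :> Type;
  gmul : gcar -> gcar -> gcar;
  gone : gcar;
  ginv : gcar -> gcar;
  gmulA : forall x y z, gmul x (gmul y z) = gmul (gmul x y) z;
  gmul1 : forall x, gmul gone x = x;
  gmulV : forall x, gmul (ginv x) x = gone }.

Fixpoint gpow (G : group) (x : G) (n : nat) : G :=
  if n is n'.+1 then gmul x (gpow x n') else gone G.

Definition group_hom (G H : group) (f : G -> H) : Prop :=
  forall x y, f (gmul x y) = gmul (f x) (f y).

Section Coxeter.
Variables (W : group) (S : finType) (sg : S -> W).
(* Coxeter matrix: [m s t = None] encodes m_{s,t} = infinity. *)
Variable (m : S -> S -> option nat).

Definition coxeter_relations (H : group) (f : S -> H) : Prop :=
  forall s t k, m s t = Some k -> gpow (gmul (f s) (f t)) k = gone H.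

Definition wprod (l : seq S) : W := foldr (fun s acc => gmul (sg s) acc) (gone W) l.

(* (W,S) is a Coxeter group with Coxeter matrix m: S is a finite subset of W
   (sg injective), m is a Coxeter matrix, and W is presented by generators S
   and relations (st)^{m_{s,t}} = 1 (generation + universal property). *)
Record coxeter_system : Prop := {
  cox_inj : injective sg;
  cox_diag : forall s, m s s = Some 1;
  cox_sym : forall s t, m s t = m t s;
  cox_offdiag : forall s t, s != t -> forall k, m s t = Some k -> 2 <= k;
  cox_rel : coxeter_relations sg;
  cox_gen : forall w : W, exists l, wprod l = w;
  cox_univ : forall (H : group) (f : S -> H), coxeter_relations f ->
     exists phi : W -> H, group_hom phi /\ forall s, phi (sg s) = f s }.

Definition inM (s t : S) : Prop := s != t /\ m s t <> None.

Definition pair_equiv (s t s' t' : S) : Prop :=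
  exists q : W, gmul (gmul q (sg s)) (ginv q) = sg s' /\
                gmul (gmul q (sg t)) (ginv q) = sg t'.

Definition reduced (w : W) (a : seq S) : Prop :=
  wprod a = w /\ forall b, wprod b = w -> size a <= size b.

Definition alt (s t : S) (n : nat) : seq S := mkseq (fun i => if odd i then t else s) n.

Definition braid_move (s t : S) (a b : seq S) : Prop :=
  exists k, m s t = Some k /\
    exists p q, a = p ++ alt s t k ++ q /\ b = p ++ alt t s k ++ q.

(* An rarc of R(w): from arc_src to arc_dst, obtained via an (arc_s,arc_t)-braid move;
   its color is the class [(arc_s, arc_t)]. *)
Record rarc := RArc { arc_src : seq S; arc_dst : seq S; arc_s : S; arc_t : S }.

Definition is_arc (w : W) (e : rarc) : Prop :=
  reduced w (arc_src e) /\ reduced w (arc_dst e) /\ inM (arc_s e) (arc_t e) /\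
  braid_move (arc_s e) (arc_t e) (arc_src e) (arc_dst e).

Definition directed_cycle (w : W) (C : seq rarc) : Prop :=
  0 < size C /\
  (forall e0 i, i < size C -> is_arc w (nth e0 C i)) /\
  (forall e0 i, i < size C ->
     arc_dst (nth e0 C i) = arc_src (nth e0 C (i.+1 %% size C))) /\
  uniq (map arc_src C).

Definition colored (s t : S) (e : rarc) : Prop := pair_equiv (arc_s e) (arc_t e) s t.

Definition ncolored (s t : S) (C : seq rarc) : nat := count (fun e => `[< colored s t e >]) C.

Definition ncolored2 (s t : S) (C : seq rarc) : nat :=
  count (fun e => `[< colored s t e \/ colored t s e >]) C.

End Coxeter.

(* Main.v *)
From HB Require Import structures.
Require Import Defs.
From mathcomp Require Import all_boot boolp zify.
Set Implicit Arguments. Unset Strict Implicit. Unset Printing Implicit Defensive.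

Section GroupLemmas.
Variable G : group.
Local Notation "x • y" := (gmul x y) (at level 40, left associativity).
Local Notation one := (gone G).

Lemma gmulVr (x : G) : x • ginv x = one.
Proof.
have e : ginv (ginv x) • ginv x = one by apply: gmulV.
rewrite -[x • _]gmul1 -e -gmulA [ginv x • (x • ginv x)]gmulA gmulV gmul1.
by [].
Qed.

Lemma gmulr1 (x : G) : x • one = x.
Proof. by rewrite -(gmulV x) gmulA gmulVr gmul1. Qed.

Lemma gmulKl (x y : G) : ginv x • (x • y) = y.
Proof. by rewrite gmulA gmulV gmul1. Qed.

Lemma gmulKr (x y : G) : x • (ginv x • y) = y.
Proof. by rewrite gmulA gmulVr gmul1. Qed.

Lemma gmulKl' (x y : G) : (y • x) • ginv x = y.
Proof. by rewrite -gmulA gmulVr gmulr1. Qed.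

Lemma gmulKr' (x y : G) : (y • ginv x) • x = y.
Proof. by rewrite -gmulA gmulV gmulr1. Qed.

Lemma gmul_injl (x y z : G) : x • y = x • z -> y = z.
Proof. by move=> e; rewrite -(gmulKl x y) e gmulKl. Qed.

Lemma gmul_injr (x y z : G) : y • x = z • x -> y = z.
Proof. by move=> e; rewrite -(gmulKl' x y) e gmulKl'. Qed.

Lemma ginv_uniq (x y : G) : x • y = one -> y = ginv x.
Proof. by move=> e; apply: (@gmul_injl x); rewrite e gmulVr. Qed.

Lemma ginvK (x : G) : ginv (ginv x) = x.
Proof. by symmetry; apply: ginv_uniq; rewrite gmulV. Qed.

Lemma ginvM (x y : G) : ginv (x • y) = ginv y • ginv x.
Proof.
symmetry; apply: ginv_uniq.
by rewrite -gmulA [y • _]gmulA gmulVr gmul1 gmulVr.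
Qed.

Lemma ginv1 : ginv one = one.
Proof. by symmetry; apply: ginv_uniq; rewrite gmul1. Qed.

Definition gconj (x y : G) := x • y • ginv x.

Lemma gconjM x y z : gconj x (gconj y z) = gconj (x • y) z.
Proof. by rewrite /gconj ginvM !gmulA. Qed.

Lemma gconj_inj x : injective (gconj x).
Proof. by move=> y z; rewrite /gconj => /gmul_injr /gmul_injl. Qed.

Lemma gconjK x y : gconj (ginv x) (gconj x y) = y.
Proof. by rewrite gconjM gmulV /gconj gmul1 ginv1 gmulr1. Qed.

Lemma gconjKV x y : gconj x (gconj (ginv x) y) = y.
Proof. by rewrite gconjM gmulVr /gconj gmul1 ginv1 gmulr1. Qed.

Lemma gconj_mul x y z : gconj x (y • z) = gconj x y • gconj x z.
Proof. by rewrite /gconj !gmulA gmulKr'. Qed.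

Lemma gconj1 x : gconj x one = one.
Proof. by rewrite /gconj gmulr1 gmulVr. Qed.

Lemma gconj_one y : gconj one y = y.
Proof. by rewrite /gconj gmul1 ginv1 gmulr1. Qed.

Lemma gconj_inv x y : gconj x (ginv y) = ginv (gconj x y).
Proof. by rewrite /gconj !ginvM ginvK gmulA. Qed.

End GroupLemmas.
HB.instance Definition _ (G : group) := gen_eqMixin (gcar G).

Section Words.
Variables (W : group) (S : finType) (sg : S -> W) (m : S -> S -> option nat).
Hypothesis HW : coxeter_system sg m.
Local Notation Wc := (gcar W).
Local Notation "x • y" := (gmul x y) (at level 40, left associativity).
Local Notation one := (gone W).
Local Notation wp := (wprod sg).
Local Notation conj := (@gconj W).

Lemma gpow1 (x : W) : gpow x 1 = x.
Proof. by rewrite /= gmulr1. Qed.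

Lemma ss s : sg s • sg s = one.
Proof. by have := cox_rel HW (cox_diag HW s); rewrite gpow1. Qed.

Lemma invs s : ginv (sg s) = sg s.
Proof. by symmetry; apply: ginv_uniq; apply: ss. Qed.

Lemma wp_cat a b : wp (a ++ b) = wp a • wp b.
Proof. by elim: a => [|x a IH] /=; rewrite ?gmul1 // IH gmulA. Qed.

Lemma wp_rev a : wp (rev a) = ginv (wp a).
Proof.
elim: a => [|x a IH]; first by rewrite /= ginv1.
by rewrite rev_cons -cats1 wp_cat IH /= gmulr1 ginvM invs.
Qed.

Lemma wp1 (s : S) : wp [:: s] = sg s.
Proof. by rewrite /= gmulr1. Qed.

Lemma wp_cons (s : S) a : wp (s :: a) = sg s • wp a.
Proof. by []. Qed.

Fixpoint tl (a : seq S) : seq Wc :=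
  if a is x :: a' then (sg x : Wc) :: map (conj (sg x)) (tl a') else [::].

Lemma size_tl a : size (tl a) = size a.
Proof. by elim: a => //= x a IH; rewrite size_map IH. Qed.

Lemma tl_cat a b : tl (a ++ b) = tl a ++ map (conj (wp a)) (tl b).
Proof.
elim: a => [|x a IH] /=.
  by rewrite (eq_map (@gconj_one W)) map_id.
by rewrite IH map_cat -map_comp; congr (_ :: _ ++ _); apply: eq_map => y /=; rewrite gconjM.
Qed.

Definition del (i : nat) (a : seq S) := take i a ++ drop i.+1 a.

Lemma tl_del a i : i < size a -> nth (one : Wc) (tl a) i • wp a = wp (del i a).
Proof.
elim: a i => [|x a IH] [|i] //= Hi.
  by rewrite /del /= drop0 gmulA ss gmul1.
rewrite (nth_map one) ?size_tl // /gconj invs -[_ • sg x • _]gmulA [sg x • (sg x • _)]gmulA ss gmul1 -gmulA.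
by rewrite IH // /del /=.
Qed.

Lemma size_del i a : i < size a -> size (del i a) = (size a).-1.
Proof.
move=> H; rewrite /del size_cat size_take size_drop H.
by case: (size a) H => // n; rewrite ltnS => H; rewrite subSS addnC subnK.
Qed.

Lemma conj_ss s x : conj (sg s) (conj (sg s) x) = x.
Proof. by rewrite gconjM ss gconj_one. Qed.

Lemma count_map_conj s (x : Wc) l :
  count_mem x (map (conj (sg s)) l) = count_mem (conj (sg s) x : Wc) l.
Proof.
rewrite count_map; apply: eq_count => y /=.
apply/eqP/eqP => [<-|->]; by rewrite conj_ss.
Qed.

Lemma altS (s t : S) n : alt s t n.+1 = s :: alt t s n.
Proof.
rewrite /alt /mkseq /=; congr (_ :: _).
rewrite -[1]addn0 iotaDl -map_comp; apply: eq_map => i /=.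
by case: (odd i).
Qed.

Lemma alt0 (s t : S) : alt s t 0 = [::].
Proof. by []. Qed.

Lemma alt_add (s t : S) n1 n2 :
  alt s t (n1 + n2) = alt s t n1 ++ (if odd n1 then alt t s n2 else alt s t n2).
Proof.
elim: n1 s t => [|n1 IH] s t; first by [].
by rewrite addSn !altS IH /=; case: (odd n1).
Qed.

Lemma alt2 (s t : S) k : alt s t (k.*2) = flatten (nseq k [:: s; t]).
Proof. by elim: k => [|k IH] //; rewrite doubleS !altS IH. Qed.

Lemma wp_alt2 (s t : S) k : wp (alt s t k.*2) = gpow (sg s • sg t) k.
Proof.
elim: k => [|k IH] //; rewrite doubleS !altS /= IH gmulA.
by [].
Qed.


Lemma mkseqS' T (f : nat -> T) n : mkseq f n.+1 = f 0 :: mkseq (fun i => f i.+1) n.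
Proof.
rewrite /mkseq /=; congr (_ :: _).
by rewrite -[1]addn0 iotaDl -map_comp.
Qed.

Lemma tl_alt (s t : S) n :
  tl (alt s t n) = mkseq (fun i => (wp (alt s t i.*2.+1) : Wc)) n.
Proof.
elim: n s t => [|n IH] s t //.
rewrite altS /= IH mkseqS' /= gmulr1; congr (_ :: _).
rewrite /mkseq -map_comp; apply: eq_map => i.
change (conj (sg s) (wp (alt t s i.*2.+1)) = wp (alt s t i.+1.*2.+1)).
have E : alt s t i.+1.*2.+1 = s :: (alt t s i.*2.+1 ++ [:: s]).
  rewrite doubleS altS -[i.*2.+2]addn1 alt_add /=.
  by rewrite odd_double.
rewrite E; change (conj (sg s) (wp (alt t s i.*2.+1)) = sg s • wp (alt t s i.*2.+1 ++ [:: s])).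
by rewrite wp_cat wp1 /gconj invs gmulA.
Qed.

Lemma nth_alt (s t : S) n i x0 : i < n -> nth x0 (alt s t n) i = if odd i then t else s.
Proof. by move=> H; rewrite /alt nth_mkseq. Qed.

Lemma size_alt (s t : S) n : size (alt s t n) = n.
Proof. by rewrite size_mkseq. Qed.

Definition isrefl (x : W) := exists q s, x = conj q (sg s).

Lemma tl_refl a x : x \in tl a -> isrefl x.
Proof.
elim: a x => [|y a IH] x //=; rewrite inE => /orP [/eqP ->|].
  by exists one, y; rewrite gconj_one.
case/mapP => z Hz ->; have [q [s' ->]] := IH _ Hz; exists (sg y • q), s'.
by rewrite gconjM.
Qed.

Lemma refl_invol x : isrefl x -> x • x = one.
Proof. by move=> [q [s' ->]]; rewrite -gconj_mul ss gconj1. Qed.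

Lemma refl_inv x : isrefl x -> ginv x = x.
Proof. by move=> H; symmetry; apply: ginv_uniq; apply: refl_invol. Qed.

Lemma isrefl_conj q x : isrefl x -> isrefl (conj q x).
Proof. by move=> [q' [s' ->]]; exists (q • q'), s'; rewrite gconjM. Qed.

Lemma alt_refl (s t : S) i : isrefl (wp (alt s t i.*2.+1)).
Proof.
apply: (@tl_refl (alt s t i.+1)).
have <- : nth (one : Wc) (tl (alt s t i.+1)) i = wp (alt s t i.*2.+1).
  by rewrite tl_alt nth_mkseq.
by rewrite mem_nth // size_tl size_alt.
Qed.

Section Period.
Variables (s t : S) (k : nat).
Hypothesis Hk : gpow (sg s • sg t) k = one.

Lemma alt_period n : wp (alt s t (k.*2 + n)) = wp (alt s t n).
Proof. by rewrite alt_add odd_double wp_cat wp_alt2 Hk gmul1. Qed.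

Lemma alt_rev_elem i : i < k ->
  wp (alt t s i.*2.+1) = wp (alt s t (k - i.+1).*2.+1).
Proof.
move=> Hi.
have E : alt s t k.*2 = alt s t (k - i.+1).*2.+1 ++ alt t s i.*2.+1.
  have Eo : k.*2 = (k - i.+1).*2.+1 + i.*2.+1.
    rewrite addSn addnS -doubleD -!doubleS; congr double.
    by rewrite -addnS subnK.
  by rewrite {1}Eo alt_add [odd _.+1]/= odd_double.
have := Hk; rewrite -wp_alt2 E wp_cat => /ginv_uniq ->.
by rewrite refl_inv //; apply: alt_refl.
Qed.

Lemma tl_alt_rev : tl (alt t s k) = rev (tl (alt s t k)).
Proof.
apply: (@eq_from_nth _ (one : Wc)); first by rewrite size_rev !size_tl !size_alt.
move=> i; rewrite size_tl size_alt => Hi.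
rewrite nth_rev ?size_tl ?size_alt // !tl_alt !nth_mkseq //; last first.
  by rewrite subnSK // leq_subr.
by rewrite alt_rev_elem // subnSK.
Qed.

Lemma rev_alt : rev (alt t s k) = if odd k then alt t s k else alt s t k.
Proof.
apply: (@eq_from_nth _ s); first by rewrite size_rev; case: ifP; rewrite !size_alt.
move=> i; rewrite size_rev size_alt => Hi.
rewrite nth_rev ?size_alt // nth_alt; last by rewrite subnSK // leq_subr.
have Ho : odd (k - i.+1) = ~~ (odd k (+) odd i).
  have := congr1 odd (subnK Hi); rewrite oddD /=.
  by case: (odd k); case: (odd i); case: (odd (k - i.+1)).
rewrite Ho; case Hk': (odd k); rewrite nth_alt //=; by case: (odd i).
Qed.

Lemma braid_rel : wp (alt s t k) = wp (alt t s k).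
Proof.
have E : alt s t k.*2 = alt s t k ++ rev (alt t s k).
  by rewrite rev_alt -addnn alt_add.
have := Hk; rewrite -wp_alt2 E wp_cat wp_rev => /ginv_uniq.
by move=> /(congr1 (@ginv W)); rewrite !ginvK => ->.
Qed.

End Period.

(* ---------- Tits' representation on W x bool ---------- *)
Local Notation X := (gcar W * bool)%type.

Record tp := TP { pf : X -> X; pg : X -> X; pKs : cancel pf pg; pKV : cancel pg pf }.

Lemma tp_eq (p q : tp) : pf p =1 pf q -> p = q.
Proof.
case: p => f g K KV; case: q => f' g' K' KV' /= E.
have Ef : f = f' by apply: funext.
subst f'.
have Eg : g = g'.
  by apply: funext => x; rewrite -{1}(KV' x) K.
subst g'.
by rewrite (Prop_irrelevance K K') (Prop_irrelevance KV KV').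
Qed.

Lemma tmul_K (p q : tp) : cancel (pf q \o pf p) (pg p \o pg q).
Proof. by move=> x /=; rewrite pKs pKs. Qed.
Lemma tmul_KV (p q : tp) : cancel (pg p \o pg q) (pf q \o pf p).
Proof. by move=> x /=; rewrite pKV pKV. Qed.

Definition tmul (p q : tp) := TP (tmul_K p q) (tmul_KV p q).
Definition tone := @TP id id (fun x => erefl) (fun x => erefl).
Definition tinv (p : tp) := TP (pKV p) (pKs p).

Lemma tmulA' : forall x y z, tmul x (tmul y z) = tmul (tmul x y) z.
Proof. by move=> x y z; apply: tp_eq. Qed.
Lemma tmul1' : forall x, tmul tone x = x.
Proof. by move=> x; apply: tp_eq. Qed.
Lemma tmulV' : forall x, tmul (tinv x) x = tone.
Proof. by move=> x; apply: tp_eq => y /=; rewrite pKV. Qed.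

Definition Tg : group := @Defs.Group tp tmul tone tinv tmulA' tmul1' tmulV'.

Definition pif (s : S) (xb : X) : X := (conj (sg s) xb.1, xb.2 (+) (xb.1 == sg s)).

Lemma pif_K s : cancel (pif s) (pif s).
Proof.
case=> x b; rewrite /pif /= conj_ss; congr pair.
have -> : (conj (sg s) x == sg s) = (x == sg s).
  have cs : conj (sg s) (sg s) = sg s by rewrite /gconj ss gmul1 invs.
  apply/eqP/eqP => [E|->] //.
  by rewrite -(conj_ss s x) E cs.
by rewrite -addbA addbb addbF.
Qed.

Definition pi (s : S) : Tg := TP (pif_K s) (pif_K s).

Definition Pw (a : seq S) : Tg := foldr (fun s acc => (gmul (pi s) acc : Tg)) (gone Tg) a.

Lemma Pw_val a x b :
  pf (Pw a) (x, b) = (conj (ginv (wp a)) x, b (+) odd (count_mem x (tl a))).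
Proof.
elim: a x b => [|s a IH] x b /=.
  by rewrite ginv1 gconj_one addbF.
rewrite IH /pif /= count_map_conj; congr pair.
  by rewrite gconjM ginvM invs.
by rewrite oddD addbA eq_sym; case: (sg s == x).
Qed.

Lemma mkseq_addn T (f : nat -> T) n1 n2 :
  mkseq f (n1 + n2) = mkseq f n1 ++ mkseq (fun i => f (n1 + i)) n2.
Proof.
rewrite /mkseq iotaD map_cat.
have -> : iota (0 + n1) n2 = map (addn n1) (iota 0 n2) by rewrite -iotaDl addn0 add0n.
by rewrite -map_comp.
Qed.

Lemma pi_rel : coxeter_relations m pi.
Proof.
move=> s t k Hk.
have Hw : gpow (sg s • sg t) k = one := cox_rel HW Hk.
have -> : gpow (gmul (pi s) (pi t)) k = Pw (alt s t k.*2).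
  elim: k {Hk Hw} => [|k IH] //.
  rewrite doubleS !altS.
  change (gmul (gmul (pi s) (pi t)) (gpow (gmul (pi s) (pi t)) k) =
          gmul (pi s) (gmul (pi t) (Pw (alt s t k.*2)))).
  by rewrite IH; symmetry; apply: tmulA'.
apply: tp_eq => -[x b].
rewrite Pw_val wp_alt2 Hw ginv1 gconj_one /=.
rewrite tl_alt -addnn mkseq_addn count_cat.
have -> : mkseq (fun i => (wp (alt s t (k + i).*2.+1) : W)) k =
          mkseq (fun i => (wp (alt s t i.*2.+1) : W)) k.
  apply: eq_mkseq => i; rewrite doubleD -addnS.
  by rewrite (alt_period Hw).
by rewrite addnn odd_double addbF.
Qed.

Lemma tits a b (x : W) : wp a = wp b ->
  odd (count_mem x (tl a)) = odd (count_mem x (tl b)).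
Proof.
move=> E.
have [phi [Hphi Hs]] := cox_univ HW pi_rel.
have phi1 : phi one = gone Tg.
  have e : gmul (phi one) (phi one) = phi one by rewrite -Hphi gmul1.
  by rewrite -(gmulKl (phi one) (phi one)) e gmulV.
have Pwphi : forall c, phi (wp c) = Pw c.
  by elim=> [|s c IH] //=; rewrite Hphi Hs IH.
have := congr1 (fun p => (pf p (x, false)).2) (congr1 phi E).
by rewrite /= !Pwphi !Pw_val.
Qed.

Lemma sg_neq1 s : sg s <> one.
Proof.
move=> E.
have H := @tits [:: s] [::] (sg s).
have /H : wp [:: s] = wp [::] by rewrite wp1 E.
by rewrite /= eqxx.
Qed.

Lemma refl_neq1 x : isrefl x -> x <> one.
Proof.
move=> [q [s ->]] E; apply: (@sg_neq1 s); apply: (@gconj_inj W q).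
by rewrite E gconj1.
Qed.

Lemma uniq_tl_size a b : uniq (tl a) -> uniq (tl b) -> wp a = wp b -> size a = size b.
Proof.
move=> Ua Ub E.
have M : tl a =i tl b.
  move=> x; have := @tits a b x E.
  by rewrite !count_uniq_mem //; case: (x \in tl a); case: (x \in tl b).
by rewrite -size_tl -(size_tl b); apply: perm_size; apply: uniq_perm.
Qed.

Lemma tl_take_prefix a j : tl a = tl (take j a) ++ map (conj (wp (take j a))) (tl (drop j a)).
Proof. by rewrite -tl_cat cat_take_drop. Qed.

Lemma nth_tl_del a i j : i < j -> j < size a ->
  nth (one : W) (tl (del j a)) i = nth one (tl a) i.
Proof.
move=> Hij Hj.
rewrite /del tl_cat (tl_take_prefix a j) !nth_cat size_tl size_take Hj Hij.
by [].
Qed.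

Lemma mem_del x i a : x \in del i a -> x \in a.
Proof.
by rewrite /del mem_cat => /orP [/mem_take|/mem_drop].
Qed.

Lemma nonuniq_del a : ~~ uniq (tl a) ->
  exists i j, [/\ i < j, j < size a & wp a = wp (del i (del j a))].
Proof.
move=> /(uniqPn (one : W)) [i [j [Hij Hj E]]].
rewrite size_tl in Hj.
exists i, j; split=> //.
have Hrj : isrefl (nth one (tl a) j) by apply: (@tl_refl a); rewrite mem_nth // size_tl.
rewrite -tl_del; last by rewrite size_del //; lia.
rewrite nth_tl_del // -tl_del // -E gmulA.
by rewrite E refl_invol // gmul1.
Qed.

Lemma size_del2 a i j : i < j -> j < size a -> size (del i (del j a)) = (size a).-2.
Proof.
move=> Hij Hj; rewrite size_del ?size_del //; try lia.
Qed.

Lemma reduce a : exists b, [/\ uniq (tl b), wp b = wp a, size b <= size a &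
  forall x, x \in b -> x \in a].
Proof.
move: (leqnn (size a)); move: {2}(size a) => n.
elim: n a => [|n IH] a Ha.
  by case: a Ha => // _; exists [::].
case U : (uniq (tl a)); first by exists a; split.
have [i [j [Hij Hj E]]] := nonuniq_del (negbT U).
have Hs := size_del2 Hij Hj.
have [|b [Ub Eb Sb Mb]] := IH (del i (del j a)).
  rewrite Hs; lia.
exists b; split=> //.
- by rewrite Eb E.
- rewrite (leq_trans Sb) // Hs; lia.
- by move=> x /Mb /mem_del /mem_del.
Qed.

Lemma uniq_min a : uniq (tl a) -> forall b, wp b = wp a -> size a <= size b.
Proof.
move=> Ua b E; have [b' [Ub' Eb' Sb' _]] := reduce b.
by rewrite -(uniq_tl_size Ub' Ua) // Eb'.
Qed.

Lemma min_uniq a : (forall b, wp b = wp a -> size a <= size b) -> uniq (tl a).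
Proof.
move=> H; apply/negP => /negP U.
have [i [j [Hij Hj E]]] := nonuniq_del U.
have := H _ (esym E).
rewrite (size_del2 Hij Hj); lia.
Qed.

Lemma del_cons0 x a : del 0 (x :: a) = a.
Proof. by rewrite /del /= drop0. Qed.

Lemma del_consS i x a : del i.+1 (x :: a) = x :: del i a.
Proof. by []. Qed.

Lemma del_catl i a b : i < size a -> del i (a ++ b) = del i a ++ b.
Proof.
rewrite /del take_cat drop_cat => H; rewrite H.
case: ltnP => H'; first by rewrite catA.
have E : size a = i.+1 by apply/eqP; rewrite eqn_leq H' H.
by rewrite E subnn drop0 -catA drop_oversize ?E.
Qed.

Lemma del_catr j a b : del (size a + j) (a ++ b) = a ++ del j b.
Proof.
rewrite /del take_cat drop_cat ltnNge leq_addr /= addKn.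
have -> : (size a + j).+1 < size a = false by apply/negbTE; lia.
by rewrite -addnS addKn catA.
Qed.

Lemma uniq_tl_cons x a : uniq (tl (x :: a)) -> uniq (tl a).
Proof. by move=> /= /andP [_]; rewrite map_inj_uniq //; apply: gconj_inj. Qed.

Lemma uniq_tl_cat a b : uniq (tl (a ++ b)) -> uniq (tl a) /\ uniq (tl b).
Proof.
rewrite tl_cat cat_uniq => /and3P [-> _]; rewrite map_inj_uniq //; apply: gconj_inj.
Qed.

Lemma Dlem a b : uniq (tl a) -> uniq (tl b) -> ~~ uniq (tl (a ++ b)) ->
  exists i j, [/\ i < size a, j < size b & wp (a ++ b) = wp (del i a ++ del j b)].
Proof.
move=> Ua Ub; rewrite tl_cat cat_uniq Ua map_inj_uniq ?Ub; last by apply: gconj_inj.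
rewrite andbT /= negbK => /hasP [x /mapP [y Hy ->] Hx].
set i := index (conj (wp a) y) (tl a); set j := index y (tl b).
have Hi : i < size a by rewrite -(size_tl a) index_mem.
have Hj : j < size b by rewrite -(size_tl b) index_mem.
exists i, j; split=> //.
have Ex : nth one (tl a) i = conj (wp a) y by rewrite nth_index.
have Hr : isrefl (conj (wp a) y) by apply: (@tl_refl a).
have E1 : nth one (tl (a ++ b)) (size a + j) = conj (wp a) y.
  by rewrite tl_cat nth_cat size_tl ltnNge leq_addr /= addKn (nth_map one) ?size_tl // nth_index.
have E2 : nth one (tl (a ++ del j b)) i = conj (wp a) y.
  by rewrite tl_cat nth_cat size_tl Hi.
have Hab : size a + j < size (a ++ b) by rewrite size_cat ltn_add2l.
have := tl_del Hab; rewrite E1 del_catr => D1.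
have Hi' : i < size (a ++ del j b) by rewrite size_cat (leq_trans Hi) ?leq_addr.
have := tl_del Hi'; rewrite E2 del_catl // => D2.
by rewrite -D2 -D1 gmulA refl_invol // gmul1.
Qed.

Lemma ex_min_word (Q : seq S -> Prop) : (exists d, Q d) ->
  exists d, Q d /\ forall d', Q d' -> size d <= size d'.
Proof.
move=> [d Hd].
have Hex : exists n, `[< exists d, Q d /\ size d = n >] by exists (size d); apply/asboolP; exists d.
case: (ex_minnP Hex) => n /asboolP [d0 [Qd0 Sd0]] Hmin.
exists d0; split=> // d' Qd'; rewrite Sd0; apply: Hmin; apply/asboolP; by exists d'.
Qed.

Lemma all_del P i a : all P a -> all P (del i a).
Proof. by move=> /allP H; apply/allP => x /mem_del /H. Qed.

Lemma wp_all1 (r : S) e : all (pred1 r) e -> wp e = one \/ wp e = sg r.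
Proof.
elim: e => [|x e IH] /=; first by left.
move=> /andP [/eqP -> /IH [->|->]]; first by right; rewrite gmulr1.
by left; rewrite ss.
Qed.

Section Kilmoyer.
Variables (pI pJ : pred S) (U0 : W) (cu : seq S).
Definition DC (z : W) := exists x y, [/\ all pI x, all pJ y & z = wp x • U0 • wp y].
Hypothesis Hcu : DC (wp cu).
Hypothesis Hmin : forall d, DC (wp d) -> size cu <= size d.
Local Notation U := (wp cu).

Lemma cu_uniq : uniq (tl cu).
Proof. by apply: min_uniq => b E; apply: Hmin; rewrite E. Qed.

Lemma Kil_l c : all pI c -> uniq (tl c) -> uniq (tl (c ++ cu)).
Proof.
move=> Ic Uc; apply/negP => /negP N.
have [i [j [Hi Hj E]]] := Dlem Uc cu_uniq N.
have : size cu <= size (del j cu).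
  apply: Hmin; have [x [y [Ix Jy Ex]]] := Hcu.
  exists (rev (del i c) ++ c ++ x), y; split.
  - by rewrite !all_cat all_rev Ic Ix !andbT; apply: all_del.
  - by [].
  rewrite [wp (c ++ cu)]wp_cat [wp (del i c ++ _)]wp_cat in E.
  have -> : wp (del j cu) = ginv (wp (del i c)) • (wp c • U) by rewrite E gmulKl.
  by rewrite Ex [wp (_ ++ _)]wp_cat [wp (c ++ x)]wp_cat wp_rev !gmulA.
by rewrite size_del //; case: (size cu) Hj => // n _; rewrite ltnn.
Qed.

Lemma Kil_r d : all pJ d -> uniq (tl d) -> uniq (tl (cu ++ d)).
Proof.
move=> Jd Ud; apply/negP => /negP N.
have [i [j [Hi Hj E]]] := Dlem cu_uniq Ud N.
have : size cu <= size (del i cu).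
  apply: Hmin; have [x [y [Ix Jy Ex]]] := Hcu.
  exists x, (y ++ d ++ rev (del j d)); split.
  - by [].
  - by rewrite !all_cat all_rev Jd Jy /=; apply: all_del.
  rewrite [wp (cu ++ d)]wp_cat [wp (del i cu ++ _)]wp_cat in E.
  have -> : wp (del i cu) = U • wp d • ginv (wp (del j d)) by rewrite E gmulKl'.
  by rewrite Ex [wp (y ++ _)]wp_cat [wp (d ++ _)]wp_cat wp_rev !gmulA.
by rewrite size_del //; case: (size cu) Hi => // n _; rewrite ltnn.
Qed.

Definition pKk (x : S) := pI x && `[< exists j, pJ j /\ conj (ginv U) (sg x) = sg j >].

Lemma Kil c : all pI c -> uniq (tl c) -> forall d, all pJ d -> wp c • U = U • wp d ->
  exists e, all pKk e /\ wp e = wp c.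
Proof.
elim: c => [|x c1 IH] Ic Uc d Jd E; first by exists [::].
move: Ic => /= /andP [Ix Ic1].
have Uc1 := uniq_tl_cons Uc.
have [d' [Ud' Ed' _ Md']] := reduce d.
have Jd' : all pJ d' by apply/allP => y /Md' /(allP Jd).
have Ic : all pI (x :: c1) by rewrite /= Ix Ic1.
have U1 := Kil_l Ic Uc.
have U2 := Kil_r Jd' Ud'.
have Esz : size (x :: c1) = size d'.
  have H : wp ((x :: c1) ++ cu) = wp (cu ++ d') by rewrite !wp_cat Ed' E.
  have := uniq_tl_size U1 U2 H; rewrite !size_cat; clear; lia.
have Nu : ~~ uniq (tl ([:: x] ++ (cu ++ d'))).
  apply/negP => Hu.
  have := uniq_min Hu (b := c1 ++ cu).
  have -> : wp (c1 ++ cu) = wp ([:: x] ++ (cu ++ d')).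
    rewrite !wp_cat Ed' -E wp1 /= !gmulA ss gmul1.
    by [].
  move=> /(_ erefl); rewrite /= !size_cat -Esz /=; clear; lia.
have Utx : uniq (tl [:: x]) by [].
have [i [j [Hi Hj E2]]] := Dlem Utx U2 Nu.
have i0 : i = 0 by case: i Hi {E2}.
subst i; rewrite del_cons0 in E2.
case: (ltnP j (size cu)) => Hju.
  exfalso.
  have : size cu <= size (del j cu).
    apply: Hmin; have [xx [y [Ix' Jy Ex]]] := Hcu.
    exists (x :: xx), y; split => //=; first by rewrite Ix.
    move: E2; rewrite cat0s cat1s del_catl // wp_cons [wp (cu ++ _)]wp_cat [wp (del j cu ++ _)]wp_cat => E2.
    have E3 : wp (del j cu) = sg x • U by apply: (@gmul_injr W (wp d')); rewrite -E2 gmulA.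
    by rewrite E3 Ex ?wp_cons !gmulA.
  by rewrite size_del //; case: (size cu) Hju => // n _; rewrite ltnn.
move: E2; rewrite cat0s cat1s -(subnKC Hju) del_catr => E2.
set j' := j - size cu in E2.
rewrite wp_cons ![wp (cu ++ _)]wp_cat in E2.
(* r := U^-1 x U is a J-word *)
set r := conj (ginv U) (sg x).
have Er : r = wp (del j' d' ++ rev d').
  have H : U • (wp (del j' d') • ginv (wp d')) = sg x • U.
    by rewrite gmulA -E2 gmulA gmulKl'.
  by rewrite wp_cat wp_rev /r /gconj ginvK -gmulA -H gmulKl.
have [dr [Udr Edr _ Mdr]] := reduce (del j' d' ++ rev d').
have Jdr : all pJ dr.
  apply/allP => y /Mdr; rewrite mem_cat mem_rev => /orP [/mem_del|] /(allP Jd') //.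
have Ix1 : all pI [:: x] by rewrite /= Ix.
have Ux := Kil_l Ix1 Utx.
have Ur := Kil_r Jdr Udr.
have := uniq_tl_size Ux Ur.
have -> : wp ([:: x] ++ cu) = wp (cu ++ dr).
  by rewrite !wp_cat Edr -Er /r /gconj ginvK wp1 !gmulA gmulVr gmul1.
move=> /(_ erefl); rewrite !size_cat /= => Sdr.
have [j0 Edr0] : exists j0, dr = [:: j0].
  have Sdr1 : size dr = 1 by move: Sdr; clear; lia.
  by case: dr Sdr1 {Udr Edr Mdr Jdr Ur Sdr} => [|j0 [|? ?]] //= _; exists j0.
subst dr.
have Jj0 : pJ j0 by move: Jdr => /= /andP [].
have Erj : r = sg j0 by rewrite Er -Edr wp1.
have Kx : pKk x by rewrite /pKk Ix; apply/asboolP; exists j0.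
have Jd1 : all pJ (j0 :: d') by rewrite /= Jj0 Jd'.
have Eq1 : wp c1 • U = U • wp (j0 :: d').
  rewrite -[wp c1](gmulKl (sg x)) invs.
  change (sg x • (sg x • wp c1) • U = U • (sg j0 • wp d')).
  rewrite -[sg x • wp c1]/(wp (x :: c1)) -gmulA E Ed' -Erj /r /gconj ginvK.
  by rewrite !gmulA gmulVr gmul1.
have [e [Ke Ee]] := IH Ic1 Uc1 (j0 :: d') Jd1 Eq1.
exists (x :: e); split; first by rewrite /= Kx Ke.
by rewrite /= Ee.
Qed.

End Kilmoyer.

(* ---------- rank-2 reflection sets ---------- *)
Definition Rp (s t : S) (x : W) :=
  exists n, x = wp (alt s t n.*2.+1) \/ x = wp (alt t s n.*2.+1).

Lemma Rp_sym s t x : Rp s t x -> Rp t s x.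
Proof. by move=> [n [E|E]]; exists n; [right|left]. Qed.

Lemma altE (s t : S) i : alt s t i.+1.*2.+1 = s :: (alt t s i.*2.+1 ++ [:: s]).
Proof.
rewrite doubleS altS -[i.*2.+2]addn1 alt_add.
by rewrite [odd _.+1]/= odd_double.
Qed.

Lemma conj_alt1 (s t : S) i : conj (sg s) (wp (alt t s i.*2.+1)) = wp (alt s t i.+1.*2.+1).
Proof. by rewrite altE wp_cons wp_cat wp1 /gconj invs !gmulA. Qed.

Lemma conj_alt2 (s t : S) i : conj (sg s) (wp (alt s t i.+1.*2.+1)) = wp (alt t s i.*2.+1).
Proof. by rewrite -conj_alt1 conj_ss. Qed.

Lemma Rp_conj_s s t x : Rp s t x -> Rp s t (conj (sg s) x).
Proof.
move=> [[|n] [->|->]].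
- by exists 0; left; rewrite /= !gmulr1 /gconj ss gmul1 invs.
- by exists 1; left; rewrite conj_alt1.
- by exists n; right; rewrite conj_alt2.
- by exists n.+2; left; rewrite conj_alt1.
Qed.

Definition pI2 (s t : S) := [pred y | (y == s) || (y == t)].

Lemma Rp_conj_word s t c x : all (pI2 s t) c -> Rp s t x -> Rp s t (conj (wp c) x).
Proof.
elim: c x => [|y c IH] x /=; first by rewrite gconj_one.
move=> /andP [Hy Hc] Hx; rewrite -gconjM.
have Hx' := IH _ Hc Hx.
by case/orP: Hy => /eqP ->; [apply: Rp_conj_s | apply/Rp_sym/Rp_conj_s/Rp_sym].
Qed.

Lemma Rp_conj_word_inv s t c x : all (pI2 s t) c -> Rp s t x -> Rp s t (conj (ginv (wp c)) x).
Proof. by rewrite -wp_rev => Hc; apply: Rp_conj_word; rewrite all_rev. Qed.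

Lemma alt_pI2 (s t : S) n : all (pI2 s t) (alt s t n).
Proof.
apply/allP => y; rewrite /alt /mkseq => /mapP [i _ ->] /=.
by case: (odd i); rewrite eqxx ?orbT.
Qed.

Lemma Rp_word s t x : Rp s t x -> exists c, all (pI2 s t) c /\ wp c = x.
Proof.
move=> [n [->|->]]; first by exists (alt s t n.*2.+1); rewrite alt_pI2.
exists (alt t s n.*2.+1); split=> //.
apply/allP => y /(allP (alt_pI2 t s _)) /=; by rewrite orbC.
Qed.

Lemma Rp_refl s t x : Rp s t x -> isrefl x.
Proof. by move=> [n [->|->]]; apply: alt_refl. Qed.

Lemma alt_transport g (s t s2 t2 : S) n :
  conj g (sg s) = sg s2 -> conj g (sg t) = sg t2 ->
  conj g (wp (alt s t n)) = wp (alt s2 t2 n).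
Proof.
elim: n s t s2 t2 => [|n IH] s t s2 t2 Hs Ht; first by rewrite /= gconj1.
by rewrite !altS !wp_cons gconj_mul Hs (IH t s t2 s2).
Qed.

Lemma Rp_transport g (s t s2 t2 : S) x :
  conj g (sg s) = sg s2 -> conj g (sg t) = sg t2 -> Rp s t x -> Rp s2 t2 (conj g x).
Proof.
move=> Hs Ht [n [->|->]]; exists n; [left|right]; exact: alt_transport.
Qed.

Lemma core_L (s t s' t' : S) (U0 : W) : s != t ->
  forall x y, x != y -> Rp s t x -> Rp s' t' (conj (ginv U0) x) ->
  Rp s t y -> Rp s' t' (conj (ginv U0) y) ->
  exists xa ya, [/\ all (pI2 s t) xa, all (pI2 s' t') ya &
   forall z, Rp s t z <-> Rp s' t' (conj (ginv (wp xa • U0 • wp ya)) (conj (wp xa) z))].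
Proof.
move=> Hst x y Hxy Hx Hx' Hy Hy'.
set pI := pI2 s t; set pJ := pI2 s' t'.
have [cu0 Ecu0] := cox_gen HW U0.
have Ex : exists d, DC pI pJ U0 (wp d).
  by exists cu0; exists [::], [::]; split=> //; rewrite /= gmul1 gmulr1.
have [cu [Hcu Hmin]] := ex_min_word Ex.
have Hcu' := Hcu; case: Hcu' => [xa [ya [Ixa Jya EU]]].
exists xa, ya; split=> //.
rewrite -EU; set U := wp cu.
have key : forall w, Rp s t w -> Rp s' t' (conj (ginv U) w) ->
  exists e, all (pKk pI pJ cu) e /\ wp e = w.
  move=> w Hw Hw'.
  have [c0 [Ic0 Ec0]] := Rp_word Hw.
  have [c [Uc Ec _ Mc]] := reduce c0.
  have Ic : all pI c by apply/allP => z /Mc /(allP Ic0).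
  have [d [Jd Ed]] := Rp_word Hw'.
  have HE : wp c • U = U • wp d by rewrite Ec Ec0 Ed /gconj ginvK !gmulA gmulVr gmul1.
  by have := Kil Hcu Hmin Ic Uc Jd HE; rewrite Ec Ec0.
have Hx1 : Rp s' t' (conj (ginv U) (conj (wp xa) x)).
  rewrite gconjM /U EU !ginvM -!gmulA gmulV gmulr1 -gconjM.
  by apply: Rp_conj_word_inv.
have Hy1 : Rp s' t' (conj (ginv U) (conj (wp xa) y)).
  rewrite gconjM /U EU !ginvM -!gmulA gmulV gmulr1 -gconjM.
  by apply: Rp_conj_word_inv.
have [ex [Kex Eex]] := key _ (Rp_conj_word Ixa Hx) Hx1.
have [ey [Key Eey]] := key _ (Rp_conj_word Ixa Hy) Hy1.
have Hxy1 : conj (wp xa) x != conj (wp xa) y.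
  by apply: contra Hxy => /eqP /gconj_inj ->.
have onlyone : forall r r', r != r' -> pI r -> pI r' -> ~~ pKk pI pJ cu r -> False.
  move=> r r' Hrr' Ir Ir' Kr.
  have all1 : forall e, all (pKk pI pJ cu) e -> all (pred1 r') e.
    move=> e /allP He; apply/allP => z /He /andP [Iz Kz] /=.
    apply/eqP; case: (z =P r') => // Hzr'.
    have Ezr : z = r.
      move: Iz Ir Ir' Hrr' (introN eqP Hzr'); rewrite /pI /pI2 /=.
      by move=> /orP[]/eqP-> /orP[]/eqP-> /orP[]/eqP->; rewrite ?eqxx.
    by move: Kr; rewrite -Ezr /pKk Iz Kz.
  have rx : isrefl (conj (wp xa) x) by apply: isrefl_conj; apply: (Rp_refl Hx).
  have ry : isrefl (conj (wp xa) y) by apply: isrefl_conj; apply: (Rp_refl Hy).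
  case: (wp_all1 (all1 _ Kex)) => Ex1; first by apply: (refl_neq1 rx); rewrite -Eex.
  case: (wp_all1 (all1 _ Key)) => Ey1; first by apply: (refl_neq1 ry); rewrite -Eey.
  by move: Hxy1; rewrite -Eex -Eey Ex1 Ey1 eqxx.
have Is : pI s by rewrite /pI /= eqxx.
have It : pI t by rewrite /pI /= eqxx orbT.
case Ks : (pKk pI pJ cu s); last by exfalso; apply: (onlyone s t Hst Is It); rewrite Ks.
case Kt : (pKk pI pJ cu t); last by exfalso; apply: (onlyone t s _ It Is); rewrite ?Kt // eq_sym.
move: Ks Kt; rewrite /pKk Is It /= => /asboolP [j1 [Jj1 E1]] /asboolP [j2 [Jj2 E2]].
have Hj12 : j1 != j2.
  apply: contra Hst => /eqP Ej; apply/eqP; apply: (cox_inj HW); apply: (@gconj_inj W (ginv U)).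
  by rewrite E1 E2 Ej.
have back1 : conj U (sg j1) = sg s by rewrite -E1 gconjM gmulVr gconj_one.
have back2 : conj U (sg j2) = sg t by rewrite -E2 gconjM gmulVr gconj_one.
have HJ : forall w, Rp j1 j2 w <-> Rp s' t' w.
  move: Jj1 Jj2 Hj12; rewrite /pJ /pI2 /= => /orP [] /eqP -> /orP [] /eqP ->; rewrite ?eqxx //;
    move=> _ w; split; by [|apply: Rp_sym].
move=> z; split.
  by move=> Hz; apply/HJ; apply: (Rp_transport E1 E2); apply: Rp_conj_word.
move=> /HJ Hz.
have := Rp_transport back1 back2 Hz; rewrite gconjM gmulVr gconj_one => Hz'.
have := Rp_conj_word_inv Ixa Hz'; by rewrite gconjM gmulV gconj_one.
Qed.

(* ---------- blocks of braid moves ---------- *)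
Lemma gpow_st (s t : S) k : m s t = Some k -> gpow (sg s • sg t) k = one.
Proof. exact: (cox_rel HW). Qed.

Lemma alt_period_mul (s t : S) k q r : gpow (sg s • sg t) k = one ->
  wp (alt s t (q * k + r).*2.+1) = wp (alt s t r.*2.+1).
Proof.
move=> Hk; elim: q => [|q IH]; first by rewrite mul0n add0n.
by rewrite mulSn -addnA doubleD -addnS (alt_period Hk).
Qed.

Lemma mem_tl_alt (s t : S) k : m s t = Some k -> 0 < k ->
  forall z, z \in tl (alt s t k) <-> Rp s t z.
Proof.
move=> Hk k0 z; have Hst := gpow_st Hk.
have Hts : gpow (sg t • sg s) k = one by apply: gpow_st; rewrite (cox_sym HW).
rewrite tl_alt /mkseq; split.
  by move=> /mapP [i _ ->]; exists i; left.
have Hin : forall i, i < k -> (wp (alt s t i.*2.+1) : W) \in map (fun i => (wp (alt s t i.*2.+1) : W)) (iota 0 k).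
  by move=> i Hi; apply: map_f; rewrite mem_iota.
move=> [n [->|->]].
  by rewrite (divn_eq n k) alt_period_mul // Hin // ltn_pmod.
rewrite (divn_eq n k) alt_period_mul // (alt_rev_elem Hst) ?ltn_pmod //.
by apply: Hin; rewrite subnSK ?ltn_pmod // leq_subr.
Qed.

Lemma head_blk P (s t : S) k : 0 < k -> head one (map (conj P) (tl (alt s t k))) = conj P (sg s).
Proof. by case: k => // k _; rewrite altS. Qed.

Lemma last_blk P (s t : S) k : gpow (sg s • sg t) k = one -> 0 < k ->
  last one (map (conj P) (tl (alt s t k))) = conj P (sg t).
Proof.
move=> Hk1 k0; have Sz : size (tl (alt s t k)) = k by rewrite size_tl size_alt.
rewrite -nth_last size_map Sz (nth_map one) ?Sz ?prednK //.
rewrite tl_alt nth_mkseq ?prednK //.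
have := alt_rev_elem Hk1 k0; rewrite subn1 => <-.
by rewrite /= gmulr1.
Qed.

Definition blk (e : rarc S) (P : W) (k : nat) : seq W :=
  map (conj P) (tl (alt (arc_s e) (arc_t e) k)).

Definition arc_spec (e : rarc S) (d : W * nat * seq W * seq W) : Prop :=
  let: (P, k, L1, L2) := d in
  [/\ tl (arc_src e) = L1 ++ blk e P k ++ L2,
      tl (arc_dst e) = L1 ++ rev (blk e P k) ++ L2,
      uniq (tl (arc_src e)) &
      head one (blk e P k) = conj P (sg (arc_s e))] /\
   [/\
      last one (blk e P k) = conj P (sg (arc_t e)),
      arc_s e != arc_t e &
      forall z, z \in blk e P k <-> Rp (arc_s e) (arc_t e) (conj (ginv P) z)].

Lemma reduced_uniq (w : W) a : reduced sg w a -> uniq (tl a).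
Proof. by move=> [E H]; apply: min_uniq => b Eb; apply: H; rewrite Eb. Qed.

Lemma arc_blockP (w : W) (e : rarc S) : is_arc sg m w e -> exists d, arc_spec e d.
Proof.
move=> [Ra [Rb [[Hst Hm] [k [Hk [p [q [Ea Eb]]]]]]]].
set s := arc_s e in Hst Hm Hk Ea Eb *; set t := arc_t e in Hst Hm Hk Ea Eb *.
have k2 : 2 <= k := cox_offdiag HW Hst Hk.
have Hk1 : gpow (sg s • sg t) k = one := gpow_st Hk.
exists (wp p, k, tl p, map (conj (wp p)) (map (conj (wp (alt s t k))) (tl q))).
rewrite /blk -/s -/t.
have Sz : size (tl (alt s t k)) = k by rewrite size_tl size_alt.
split; split.
- by rewrite Ea !tl_cat map_cat.
- rewrite Eb !tl_cat map_cat -(braid_rel Hk1) (tl_alt_rev Hk1) map_rev.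
  by [].
- exact: (reduced_uniq Ra).
- by rewrite /blk -/s; apply: head_blk; apply: leq_trans k2.
- by rewrite /blk -/s -/t; apply: last_blk => //; apply: leq_trans k2.
- exact: Hst.
- move=> z; rewrite -(mem_tl_alt Hk) ?(leq_trans _ k2) //; split.
    by move=> /mapP [y Hy ->]; rewrite gconjK.
  by move=> H; apply/mapP; exists (conj (ginv (wp p)) z) => //; rewrite gconjKV.
Qed.

Lemma block_dich e e' d d' : arc_spec e d -> arc_spec e' d' ->
  let: (P, k, _, _) := d in let: (P', k', _, _) := d' in
  (blk e P k =i blk e' P' k') \/
  (forall x y, x \in blk e P k -> x \in blk e' P' k' ->
               y \in blk e P k -> y \in blk e' P' k' -> x = y).
Proof.
case: d => [[[P k] L1] L2]; case: d' => [[[P' k'] L1'] L2'].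
move=> [_ [_ Hst M]] [_ [_ Hst' M']].
set s := arc_s e; set t := arc_t e; set s' := arc_s e'; set t' := arc_t e'.
case: (pselect (exists x y, [/\ x != y, x \in blk e P k, x \in blk e' P' k',
                                   y \in blk e P k & y \in blk e' P' k'])); last first.
  move=> N; right => x y Hx Hx' Hy Hy'; apply/eqP/negP => /negP Hxy; apply: N.
  by exists x, y.
move=> [x [y [Hxy /M Hx /M' Hx' /M Hy /M' Hy']]]; left.
set U0 := ginv P • P'.
have cvt : forall z, conj (ginv U0) (conj (ginv P) z) = conj (ginv P') z.
  by move=> z; rewrite gconjM /U0 ginvM ginvK -gmulA gmulVr gmulr1.
have Hxy' : conj (ginv P) x != conj (ginv P) y.
  by apply: contra Hxy => /eqP /gconj_inj ->.
have Hx2 : Rp s' t' (conj (ginv U0) (conj (ginv P) x)) by rewrite cvt.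
have Hy2 : Rp s' t' (conj (ginv U0) (conj (ginv P) y)) by rewrite cvt.
have [xa [ya [Ixa Jya Hz]]] := @core_L s t s' t' U0 Hst _ _ Hxy' Hx Hx2 Hy Hy2.
have cvt2 : forall z, conj (ginv (wp xa • U0 • wp ya)) (conj (wp xa) (conj (ginv P) z))
               = conj (ginv (wp ya)) (conj (ginv P') z).
  move=> z; rewrite !gconjM; congr gconj.
  by rewrite !ginvM /U0 ?ginvM ?ginvK -!gmulA gmulKl gmulVr gmulr1.
move=> z; apply/idP/idP => Hz0.
  have := (Hz _).1 ((M z).1 Hz0); rewrite cvt2 => H; apply/(M' z).
  by have := Rp_conj_word Jya H; rewrite gconjKV.
apply/(M z); apply/(Hz _); rewrite cvt2.
by apply: Rp_conj_word_inv => //; apply/(M' z).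
Qed.

(* ---------- orientation of blocks ---------- *)
Definition ori (B : seq W) (a : seq S) : seq W := [seq z <- tl a | z \in B].

Lemma head_rev (x0 : W) s : head x0 (rev s) = last x0 s.
Proof. by case/lastP: s => [|s x] //; rewrite rev_rcons last_rcons. Qed.

Lemma last_rev (x0 : W) s : last x0 (rev s) = head x0 s.
Proof. by case: s => [|x s] //; rewrite rev_cons last_rcons. Qed.

Lemma rev_const (l : seq W) : (forall x y, x \in l -> y \in l -> x = y) -> rev l = l.
Proof.
move=> H; apply: (@eq_from_nth _ one); first by rewrite size_rev.
move=> i; rewrite size_rev => Hi; rewrite nth_rev //.
apply: H; apply: mem_nth => //.
by move: Hi; case: (size l) => // n _; rewrite subSS ltnS leq_subr.
Qed.

Lemma filter_nohas (B L : seq W) : ~~ has (fun z => z \in L) B -> [seq z <- L | z \in B] = [::].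
Proof.
move=> H; apply/eqP; rewrite -(negbK (_ == _)) -has_filter; apply: contra H.
by move=> /hasP [z Hz HzB]; apply/hasP; exists z.
Qed.

Lemma ori_blk e d : arc_spec e d ->
  let: (P, k, _, _) := d in
  ori (blk e P k) (arc_src e) = blk e P k /\ ori (blk e P k) (arc_dst e) = rev (blk e P k).
Proof.
case: d => [[[P k] L1] L2] [[E1 E2 U _] _]; set B := blk e P k.
move: U; rewrite E1 cat_uniq => /and3P [_ H1 U2].
move: U2; rewrite cat_uniq => /and3P [_ H2 _].
move: H1; rewrite has_cat negb_or => /andP [H1 _].
have F1 : [seq z <- L1 | z \in B] = [::] by apply: filter_nohas.
have F2 : [seq z <- L2 | z \in B] = [::].
  apply: filter_nohas; rewrite has_sym; exact: H2.
have FB : [seq z <- B | z \in B] = B by apply/all_filterP/allP.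
have FrB : [seq z <- rev B | z \in B] = rev B by rewrite filter_rev FB.
by rewrite /ori E1 E2 !filter_cat F1 F2 FB FrB !cats0.
Qed.

Lemma ori_other e d (B' : seq W) : arc_spec e d ->
  let: (P, k, _, _) := d in
  (forall x y, x \in blk e P k -> x \in B' -> y \in blk e P k -> y \in B' -> x = y) ->
  ori B' (arc_dst e) = ori B' (arc_src e).
Proof.
case: d => [[[P k] L1] L2] [[E1 E2 _ _] _] H.
rewrite /ori E1 E2 !filter_cat filter_rev rev_const //.
move=> x y; rewrite !mem_filter => /andP [Hx Hx'] /andP [Hy Hy'].
exact: H.
Qed.

Definition peq (x y : W) (s' t' : S) := exists q, conj q x = sg s' /\ conj q y = sg t'.

Lemma peq_conj P x y s' t' : peq (conj P x) (conj P y) s' t' <-> peq x y s' t'.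
Proof.
split=> [[q [E1 E2]]|[q [E1 E2]]].
  by exists (q • P); rewrite -!gconjM.
by exists (q • ginv P); rewrite !gconjM gmulKr'.
Qed.

Lemma peq_swap x y s' t' : peq x y s' t' <-> peq y x t' s'.
Proof. by split=> [[q [E1 E2]]|[q [E1 E2]]]; exists q. Qed.

Lemma colored_peq (s' t' : S) e : colored sg s' t' e <-> peq (sg (arc_s e)) (sg (arc_t e)) s' t'.
Proof. by []. Qed.

Definition Bd (e : rarc S) (d : W * nat * seq W * seq W) := blk e d.1.1.1 d.1.1.2.

Lemma ori_blk' e d : arc_spec e d ->
  ori (Bd e d) (arc_src e) = Bd e d /\ ori (Bd e d) (arc_dst e) = rev (Bd e d).
Proof. by case: d => [[[P k] L1] L2]; apply: ori_blk. Qed.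

Lemma dich' e d e' d' : arc_spec e d -> arc_spec e' d' ->
  (Bd e d =i Bd e' d') \/
  (forall x y, x \in Bd e d -> x \in Bd e' d' -> y \in Bd e d -> y \in Bd e' d' -> x = y).
Proof.
case: d => [[[P k] L1] L2]; case: d' => [[[P' k'] L1'] L2'] H H'.
exact: (block_dich H H').
Qed.

Lemma ori_other' e d B' : arc_spec e d ->
  (forall x y, x \in Bd e d -> x \in B' -> y \in Bd e d -> y \in B' -> x = y) ->
  ori B' (arc_dst e) = ori B' (arc_src e).
Proof. by case: d => [[[P k] L1] L2] H1 H2; have /= := @ori_other e _ B' H1; apply. Qed.

Lemma color_Bd e d (s' t' : S) : arc_spec e d ->
  colored sg s' t' e <-> peq (head one (Bd e d)) (last one (Bd e d)) s' t'.
Proof.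
case: d => [[[P k] L1] L2] [[_ _ _ Hh] [Hl _ _]].
by rewrite /Bd /= Hh Hl peq_conj.
Qed.

Lemma Bd_neq_rev e d : arc_spec e d -> Bd e d != rev (Bd e d).
Proof.
case: d => [[[P k] L1] L2] [[_ _ _ Hh] [Hl Hst _]].
apply/negP => /eqP E.
have : head one (Bd e (P, k, L1, L2)) = head one (rev (Bd e (P, k, L1, L2))) by rewrite -E.
rewrite head_rev /Bd /= Hh Hl => /gconj_inj /(cox_inj HW) Est.
by move: Hst; rewrite Est eqxx.
Qed.

Lemma count_sum T (p : pred T) (x0 : T) (l : seq T) :
  count p l = \sum_(i < size l) p (nth x0 l i).
Proof.
elim: l => [|x l IH]; first by rewrite big_ord0.
by rewrite big_ord_recl /= IH.
Qed.

Lemma sum_shift (f : nat -> nat) n : 0 < n ->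
  \sum_(i < n) f ((i.+1) %% n) = \sum_(i < n) f i.
Proof.
case: n => // n _.
rewrite big_ord_recr big_ord_recl /= modnn addnC; congr (_ + _).
by apply: eq_bigr => i _; rewrite modn_small // ltnS.
Qed.

Section Cycle.
Variables (w : W) (C : seq (rarc S)) (s0 t0 : S).
Hypothesis HC : directed_cycle sg m w C.
Local Notation n := (size C).
Let e0 := RArc [::] [::] s0 t0.
Local Notation E i := (nth e0 C i).
Local Notation src i := (arc_src (E i)).

Lemma ex_spec i : exists d, i < n -> arc_spec (E i) d.
Proof.
case: (ltnP i n) => Hi; last by exists (one, 0, [::], [::]).
have [_ [Harc _]] := HC.
by have [d Hd] := arc_blockP (Harc e0 i Hi); exists d.
Qed.

Let dd i := proj1_sig (cid (ex_spec i)).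
Let Hspec i : i < n -> arc_spec (E i) (dd i) := proj2_sig (cid (ex_spec i)).
Let Bk i := Bd (E i) (dd i).

Lemma link i : i < n -> arc_dst (E i) = src ((i.+1) %% n).
Proof. by have [_ [_ [H _]]] := HC; apply: H. Qed.

Definition eqB i j := `[< Bk i =i Bk j >].
Definition rep j := all (fun j' => ~~ eqB j' j) (iota 0 j).

Lemma eqB_refl i : eqB i i.
Proof. by apply/asboolP. Qed.
Lemma eqB_sym i j : eqB i j -> eqB j i.
Proof. by move=> /asboolP H; apply/asboolP => x; rewrite H. Qed.
Lemma eqB_trans i j k : eqB i j -> eqB j k -> eqB i k.
Proof. by move=> /asboolP H1 /asboolP H2; apply/asboolP => x; rewrite H1 H2. Qed.

Lemma pick_rep i : i < n -> exists js, [/\ js < n, rep js, eqB js i &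
  forall j, j < n -> rep j -> eqB j i -> j = js].
Proof.
move=> Hi.
have Hex : exists j, eqB j i by exists i; apply: eqB_refl.
case: (ex_minnP Hex) => js Hjs Hmin.
have Hjsi : js <= i by apply: Hmin; apply: eqB_refl.
exists js; split.
- exact: leq_ltn_trans Hjsi Hi.
- apply/allP => j'; rewrite mem_iota add0n => /andP [_ Hj']; apply/negP => Hb.
  have := Hmin j' (eqB_trans Hb Hjs); rewrite leqNgt Hj'.
  by [].
- exact: Hjs.
- move=> j Hj Rj Ej; apply/eqP; rewrite eqn_leq Hmin // andbT.
  rewrite leqNgt; apply/negP => Hlt.
  move: Rj => /allP /(_ js); rewrite mem_iota add0n Hlt => /(_ isT).
  by rewrite (eqB_trans Hjs (eqB_sym Ej)).
Qed.

Lemma not_eqB_other i j : i < n -> j < n -> ~~ eqB j i ->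
  ori (Bk j) (arc_dst (E i)) = ori (Bk j) (src i).
Proof.
move=> Hi Hj NE.
case: (dich' (Hspec Hi) (Hspec Hj)) => [Eq|H].
  by exfalso; move/negP: NE; apply; apply/asboolP => x; rewrite /Bk Eq.
exact: (ori_other' (Hspec Hi) H).
Qed.

Lemma eqB_ori i j a : eqB j i -> ori (Bk j) a = ori (Bk i) a.
Proof. by move=> /asboolP H; apply: eq_filter => x; rewrite H. Qed.

Definition term1 j a : nat := `[< peq (head one (ori (Bk j) a)) (last one (ori (Bk j) a)) s0 t0 >].
Definition Phi a := \sum_(j < n | rep j) term1 j a.

Lemma Phi_step i : i < n ->
  Phi (arc_dst (E i)) + `[< colored sg s0 t0 (E i) >] = Phi (src i) + `[< colored sg t0 s0 (E i) >].
Proof.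
move=> Hi; have [js [Hjs Rjs Ejs Uniq]] := pick_rep Hi.
have D : forall a, Phi a = term1 js a + \sum_(j < n | rep j && (j != Ordinal Hjs)) term1 j a.
  by move=> a; rewrite /Phi (bigD1 (Ordinal Hjs)).
rewrite !D.
have -> : \sum_(j < n | rep j && (j != Ordinal Hjs)) term1 j (arc_dst (E i)) =
          \sum_(j < n | rep j && (j != Ordinal Hjs)) term1 j (src i).
  apply: eq_bigr => j /andP [Rj Nj]; rewrite /term1 not_eqB_other //.
  apply/negP => Ej; move/negP: Nj; apply; apply/eqP; apply: val_inj.
  exact: (Uniq j (ltn_ord j) Rj Ej).
rewrite /term1 !(eqB_ori _ Ejs).
have [O1 O2] := ori_blk' (Hspec Hi); rewrite -/(Bk i) in O1 O2; rewrite O1 O2.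
rewrite head_rev last_rev.
have C1 := color_Bd s0 t0 (Hspec Hi); have C2 := color_Bd t0 s0 (Hspec Hi).
rewrite -/(Bk i) in C1 C2.
have -> : `[< peq (head one (Bk i)) (last one (Bk i)) s0 t0 >] = `[< colored sg s0 t0 (E i) >].
  by apply/asboolP/asboolP => /C1.
have -> : `[< peq (last one (Bk i)) (head one (Bk i)) s0 t0 >] = `[< colored sg t0 s0 (E i) >].
  by apply/asboolP/asboolP => H; [apply/C2/peq_swap | apply/peq_swap/C2].
set A := `[< colored sg t0 s0 (E i) >]; set B := `[< colored sg s0 t0 (E i) >].
set R := \sum_(j < n | _) _.
by rewrite -addnA addnC [R + _]addnC.
Qed.

Lemma n_pos : 0 < n.
Proof. by case: HC. Qed.

Lemma part_a : ncolored sg s0 t0 C = ncolored sg t0 s0 C.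
Proof.
rewrite /ncolored !(count_sum _ e0).
have H := congr1 (fun F => \sum_(i < n) F i) (funext (fun i : 'I_n => Phi_step (ltn_ord i))).
move: H => /=; rewrite !big_split /=.
have -> : \sum_(i < n) Phi (arc_dst (E i)) = \sum_(i < n) Phi (src i).
  rewrite -(sum_shift (fun i => Phi (src i)) n_pos); apply: eq_bigr => i _.
  by rewrite link.
by move/eqP; rewrite eqn_add2l => /eqP.
Qed.

Definition pc2 (L : seq W) : bool :=
  `[< peq (head one L) (last one L) s0 t0 \/ peq (head one L) (last one L) t0 s0 >].

Lemma pc2_rev L : pc2 (rev L) = pc2 L.
Proof.
rewrite /pc2 head_rev last_rev.
by apply/asboolP/asboolP => -[H|H]; [right|left|right|left]; apply/peq_swap.
Qed.

Let X j := ori (Bk j) (src 0).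

Lemma two_valued j i : j < n -> i < n -> ori (Bk j) (src i) \in [:: X j; rev (X j)].
Proof.
move=> Hj; elim: i => [|i IH] Hi; first by rewrite inE eqxx.
have Hi' : i < n by apply: ltnW.
have := link Hi'; rewrite modn_small // => <-.
case Eji : (eqB j i); last by rewrite not_eqB_other ?Eji //; apply: IH.
have [O1 O2] := ori_blk' (Hspec Hi'); rewrite -/(Bk i) in O1 O2.
move: (IH Hi'); rewrite !(eqB_ori _ Eji) O1 O2 !inE => /orP [/eqP ->|/eqP ->].
  by rewrite eqxx orbT.
by rewrite revK eqxx.
Qed.

Definition term2 j a : nat := pc2 (ori (Bk j) a) && (ori (Bk j) a == X j).
Definition Psi a := \sum_(j < n | rep j) term2 j a.

Lemma Psi_step i : i < n -> exists R,
  Psi (src i) + Psi (arc_dst (E i)) = R + R + `[< colored sg s0 t0 (E i) \/ colored sg t0 s0 (E i) >].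
Proof.
move=> Hi; have [js [Hjs Rjs Ejs Uniq]] := pick_rep Hi.
exists (\sum_(j < n | rep j && (j != Ordinal Hjs)) term2 j (src i)).
have D : forall a, Psi a = term2 js a + \sum_(j < n | rep j && (j != Ordinal Hjs)) term2 j a.
  by move=> a; rewrite /Psi (bigD1 (Ordinal Hjs)).
rewrite !D.
have -> : \sum_(j < n | rep j && (j != Ordinal Hjs)) term2 j (arc_dst (E i)) =
          \sum_(j < n | rep j && (j != Ordinal Hjs)) term2 j (src i).
  apply: eq_bigr => j /andP [Rj Nj]; rewrite /term2 not_eqB_other //.
  apply/negP => Ej; move/negP: Nj; apply; apply/eqP; apply: val_inj.
  exact: (Uniq j (ltn_ord j) Rj Ej).
have TV := two_valued Hjs Hi.
rewrite /term2 !(eqB_ori _ Ejs) in TV *.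
have [O1 O2] := ori_blk' (Hspec Hi); rewrite -/(Bk i) in O1 O2; rewrite O1 O2 in TV *.
rewrite pc2_rev.
have -> : pc2 (Bk i) = `[< colored sg s0 t0 (E i) \/ colored sg t0 s0 (E i) >].
  have C1 := color_Bd s0 t0 (Hspec Hi); have C2 := color_Bd t0 s0 (Hspec Hi).
  rewrite -/(Bk i) in C1 C2.
  by apply/asboolP/asboolP => -[H|H]; [left; apply/C1|right; apply/C2|left; apply/C1|right; apply/C2].
have NR := Bd_neq_rev (Hspec Hi); rewrite -/(Bk i) in NR.
set c := `[< _ \/ _ >]; set R := \sum_(j < n | _) _.
have Hone : (Bk i == X js) + (rev (Bk i) == X js) = 1.
  move: TV; rewrite !inE => /orP [/eqP E1|/eqP E1].
    rewrite -E1 eqxx.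
    have -> : (rev (Bk i) == Bk i) = false by rewrite eq_sym; apply: negbTE.
    by [].
  have E2 : X js = rev (Bk i) by rewrite E1 revK.
  rewrite E2 eqxx.
  by rewrite (negbTE NR).
move: Hone; case: c; case: (Bk i == X js); case: (rev (Bk i) == X js) => //= _.
all: rewrite ?add0n ?addn0 //.
- by rewrite -addnA addnC.
- by rewrite add1n addnS addn1.
Qed.

Lemma part_b : ~~ odd (ncolored2 sg s0 t0 C).
Proof.
rewrite /ncolored2 (count_sum _ e0).
have H : forall i : 'I_n, exists R, Psi (src i) + Psi (arc_dst (E i)) = R + R +
  `[< colored sg s0 t0 (E i) \/ colored sg t0 s0 (E i) >].
  by move=> i; apply: Psi_step.
pose Rf (i : 'I_n) := proj1_sig (cid (H i)).
have HR : forall i : 'I_n, Psi (src i) + Psi (arc_dst (E i)) = Rf i + Rf i +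
  `[< colored sg s0 t0 (E i) \/ colored sg t0 s0 (E i) >] := fun i => proj2_sig (cid (H i)).
have := congr1 (fun F => \sum_(i < n) F i) (funext HR) => /=.
rewrite !big_split /=.
have -> : \sum_(i < n) Psi (arc_dst (E i)) = \sum_(i < n) Psi (src i).
  rewrite -(sum_shift (fun i => Psi (src i)) n_pos); apply: eq_bigr => i _.
  by rewrite link.
by move=> /(congr1 odd); rewrite !oddD !addbb /= => <-.
Qed.

End Cycle.

End Words.

Theorem theorem2p3 (W : group) (S : finType) (sg : S -> W) (m : S -> S -> option nat)
  (HW : coxeter_system sg m) (w : W) (C : seq (@rarc S))
  (HC : directed_cycle sg m w C) (s t : S) (Hst : inM m s t) :
  ncolored sg s t C = ncolored sg t s C /\ ~~ odd (ncolored2 sg s t C).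
Proof.
split; [exact: (part_a HW s t HC) | exact: (part_b HW s t HC)].
Qed.
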